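(* Let $f\colon 2^{\mathcal{N}}\to\mathbb{R}$ be non-negative and submodular, $|\mathcal{N}|=n$, $k$ a positive integer, $\varepsilon>0$, and let $S\subseteq\mathcal{N}$ with $|S|=k$. Assume $\mathcal{N}\setminus S$ contains a dummy element $d$ (i.e., $f(A\cup\{d\})=f(A)$ for all $A\subseteq\mathcal{N}$). Suppose there exist an integer $1\le t\le k$ and sets $T_+\subseteq\mathcal{N}\setminus S$, $T_-\subseteq S$ with $|T_+|=|T_-|=t$ and \[ \sum_{u\in T_+} f(u\mid S)\ >\ \sum_{v\in T_-} f(v\mid S-v)+\varepsilon f(S). \] Let $Z$ be a uniformly random subset of $\mathcal{N}$ of size $\lceil n/k\rceil$. Let $u$ be an element of $Z\setminus S$ maximizing $f(u\mid S)$, except that $u:=d$ if $Z\setminus S=\emptyset$ or $\max_{u'\in Z\setminus S}f(u'\mid S)\le 0$. Let $v\in\arg\min_{v'\in S} f(v'\mid S-v')$. Define $S'=S-v+u$ if $f(S-v+u)>f(S)$, and $S'=S$ otherwise. Then \[ \mathbb{E}\big[f(S')-f(S)\big]\ \ge\ \frac{(1-1/e)\,\varepsilon}{k}\, f(S). \]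
   Context: Notation: $f(u\mid A)=f(A\cup\{u\})-f(A)$; $S-v=S\setminus\{v\}$, $S+u=S\cup\{u\}$. Submodularity: $f(A\cup\{s\})-f(A)\ge f(B\cup\{s\})-f(B)$ for all $A\subseteq B\subseteq\mathcal{N}$, $s\notin B$. *)

(* Defs.v *)
From HB Require Import structures.
From mathcomp Require Import all_boot all_order all_algebra.
From mathcomp Require Import reals sequences exp.
Set Implicit Arguments. Unset Strict Implicit. Unset Printing Implicit Defensive.
Import Order.TTheory GRing.Theory Num.Theory.
Local Open Scope ring_scope.

Definition marg {T : finType} {R : realType} (f : {set T} -> R) (u : T) (A : {set T}) : R :=
  f (u |: A) - f A.

Definition nonneg_setfun {T : finType} {R : realType} (f : {set T} -> R) : Prop :=
  forall A, 0 <= f A.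

Definition submodular {T : finType} {R : realType} (f : {set T} -> R) : Prop :=
  forall (A B : {set T}) (s : T), A \subset B -> s \notin B ->
    f (s |: A) - f A >= f (s |: B) - f B.

Definition dummy {T : finType} {R : realType} (f : {set T} -> R) (d : T) : Prop :=
  forall A, f (d |: A) = f A.

Definition ceil_div (n k : nat) : nat := (n + k.-1) %/ k.

(* Main.v *)
Require Import Defs.
From HB Require Import structures.
From mathcomp Require Import all_boot all_order all_algebra.
From mathcomp Require Import reals sequences exp.
From mathcomp Require Import zify ring lra.
Import Order.TTheory GRing.Theory Num.Theory.
Local Open Scope ring_scope.

Lemma ceil_facts n k : (0 < k)%N -> (0 < n)%N ->
  (n <= k * ceil_div n k)%N /\ (ceil_div n k <= n)%N.
Proof. rewrite /ceil_div => hk hn.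
have e := divn_eq (n+k.-1) k; have := ltn_pmod (n+k.-1) hk.
set q := (_ %/ _)%N in e *; set r := (_ %% _)%N in e *.
move=> hr; split; nia. Qed.

Lemma concave_pow (R : realType) (q : R) (i k : nat) : 0 <= q -> q <= 1 -> (i <= k)%N ->
  i%:R * (1 - q ^+ k) <= k%:R * (1 - q ^+ i).
Proof.
move=> q0 q1 ik.
have G j : 1 - q ^+ j = (1 - q) * \sum_(0 <= l < j) q ^+ l.
  by rewrite big_mkord -opprB subrX1 -mulNr opprB.
rewrite !G.
set si := \sum_(0 <= l < i) q ^+ l.
have Hk : \sum_(0 <= l < k) q ^+ l = si + \sum_(i <= l < k) q ^+ l.
  by rewrite (@big_cat_nat _ _ _ i).
set B := \sum_(i <= l < k) q ^+ l in Hk.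
have HB : B <= (k - i)%:R * q ^+ i.
  rewrite /B mulr_natl -sumr_const_nat.
  apply: ler_sum_nat => l /andP [il _]; exact: ler_wiXn2l.
have Hs : i%:R * q ^+ i <= si.
  rewrite /si mulr_natl -[X in _ *+ X](subn0 i) -sumr_const_nat.
  apply: ler_sum_nat => l /andP [_ li]; apply: ler_wiXn2l => //; exact: ltnW.
rewrite Hk; rewrite natrB // in HB.
have x0 : 0 <= q ^+ i by apply: exprn_ge0.
have i0 : 0 <= i%:R :> R by [].
have ki : i%:R <= k%:R :> R by rewrite ler_nat.
suff : i%:R * (si + B) <= k%:R * si by nra.
nra.
Qed.

Lemma qk_le (R : realType) (k : nat) : (0 < k)%N ->
  (1 - k%:R^-1) ^+ k <= (expR 1)^-1 :> R.
Proof.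
move=> k0.
have kR : 0 < k%:R :> R by rewrite ltr0n.
have q0 : 0 <= 1 - k%:R^-1 :> R.
  by rewrite subr_ge0 invr_le1 // ?ler1n // unitfE gt_eqF.
have -> : (expR 1)^-1 = expR (- k%:R^-1) ^+ k :> R.
  by rewrite -expRM_natl mulrN mulfV ?gt_eqF // expRN.
apply: lerXn2r => //; first by rewrite nnegrE expR_ge0.
by have := expR_ge1Dx (- k%:R^-1 : R).
Qed.

Lemma bin_decay (R : realType) (n m k a : nat) : (0 < k)%N -> (n <= k * m)%N ->
  (0 < a)%N -> (a <= n)%N ->
  'C(a.-1, m)%:R <= (1 - k%:R^-1) * 'C(a, m)%:R :> R.
Proof.
move=> k0 nkm a0 an.
have hn0 : (k * (a - m) + a <= k * a)%N.
  case: (leqP m a) => ma.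
    have := leq_mul2l k m a; rewrite ma orbT => h.
    rewrite mulnBr; move: (k * a)%N (k * m)%N nkm h => X Y; lia.
  have -> : (a - m = 0)%N by apply/eqP; rewrite subn_eq0 ltnW.
  by rewrite muln0 add0n leq_pmull.
have hn : (k * (a * 'C(a.-1,m)) + a * 'C(a,m) <= k * a * 'C(a,m))%N.
  by rewrite mul_bin_down mulnA -mulnDl leq_mul2r hn0 orbT.
move: hn; rewrite -(ler_nat R) natrD !natrM => hn.
have kR : 0 < k%:R :> R by rewrite ltr0n.
have aR : 0 < a%:R :> R by rewrite ltr0n.
have ki : k%:R * k%:R^-1 = 1 :> R by rewrite mulfV ?gt_eqF.
set C := 'C(a, m)%:R in hn *; set C' := 'C(a.-1, m)%:R in hn *.
set ik := k%:R^-1 in ki *.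
rewrite -(@ler_pM2l _ (k%:R * a%:R)) ?mulr_gt0 //.
have -> : k%:R * a%:R * ((1 - ik) * C) = k%:R * a%:R * C - (k%:R * ik) * (a%:R * C).
  by ring.
rewrite ki mul1r.
set KA := k%:R * a%:R * C in hn *.
set K1 := k%:R * (a%:R * C') in hn.
have -> : k%:R * a%:R * C' = K1 by rewrite /K1 mulrA.
set AC := a%:R * C in hn *.
lra.
Qed.

Lemma bin_pow (R : realType) (n m k i : nat) : (0 < k)%N -> (n <= k * m)%N ->
  (i <= n)%N -> 'C(n - i, m)%:R <= (1 - k%:R^-1) ^+ i * 'C(n, m)%:R :> R.
Proof.
move=> k0 nkm; elim: i => [|i IH] hi; first by rewrite subn0 expr0 mul1r.
have q0 : 0 <= 1 - k%:R^-1 :> R.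
  have kR : 0 < k%:R :> R by rewrite ltr0n.
  by rewrite subr_ge0 invr_le1 // ?ler1n // unitfE gt_eqF.
rewrite subnS exprS -mulrA.
have hd := bin_decay R n m k (n - i) k0 nkm (_ : (0 < n - i)%N) (leq_subr i n).
apply: le_trans (hd _) _.
- by rewrite subn_gt0.
- by apply: ler_wpM2l => //; apply: IH; apply: ltnW.
Qed.

Lemma sum_ind (R : realType) (I : finType) (P : pred I) :
  \sum_(i : I) ((P i)%:R : R) = #|[set i | P i]|%:R.
Proof.
have -> : (#|[set i | P i]|%:R : R) = \sum_(i in [set i | P i]) 1 by rewrite sumr_const.
rewrite [RHS]big_mkcond /=.
apply: eq_bigr => i _; rewrite inE; by case: (P i).
Qed.

Lemma q_bounds (R : realType) (k : nat) : (0 < k)%N ->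
  0 <= 1 - k%:R^-1 :> R /\ 1 - k%:R^-1 <= 1 :> R.
Proof.
move=> k0; have kR : 0 < k%:R :> R by rewrite ltr0n.
split; first by rewrite subr_ge0 invr_le1 // ?ler1n // unitfE gt_eqF.
by rewrite gerBl invr_ge0 ltW.
Qed.

Lemma hit_prob (R : realType) (T : finType) (k : nat) (A : {set T}) :
  (0 < k)%N -> (0 < #|T|)%N -> (#|A| <= k)%N ->
  (1 - (expR 1)^-1) * #|A|%:R / k%:R * #|[set Z : {set T} | #|Z| == ceil_div #|T| k]|%:R
   <= \sum_(Z in [set Z : {set T} | #|Z| == ceil_div #|T| k]) ((Z :&: A != set0)%:R : R).
Proof.
move=> k0 n0 Ak.
set n := #|T|; set m := ceil_div n k; set Zs := [set Z : {set T} | #|Z| == m].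
have [nkm _] := ceil_facts n k k0 n0.
have Hs : \sum_(Z in Zs) ((Z :&: A != set0)%:R : R) =
   #|Zs|%:R - \sum_(Z in Zs) ((Z :&: A == set0)%:R : R).
  have H1 : \sum_(Z in Zs) (((Z :&: A != set0)%:R : R) + (Z :&: A == set0)%:R) = #|Zs|%:R.
    have -> : (#|Zs|%:R : R) = \sum_(Z in Zs) 1 by rewrite sumr_const.
    by apply: eq_bigr => Z _; case: (_ == set0); rewrite /= ?addr0 ?add0r.
  by rewrite -H1 big_split /= addrK.
have HD : \sum_(Z in Zs) ((Z :&: A == set0)%:R : R) = 'C(n - #|A|, m)%:R.
  rewrite big_mkcond /=.
  rewrite (eq_bigr (fun Z => (((Z \in Zs) && (Z :&: A == set0))%:R : R))); last first.
    by move=> Z _; case: (Z \in Zs).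
  rewrite sum_ind; congr (_%:R).
  have -> : (n - #|A| = #|~: A|)%N by rewrite /n -(cardsC A) addKn.
  rewrite -cards_draws; apply: eq_card => Z; rewrite !inE setI_eq0 disjoints_subset andbC.
  by [].
have HN : #|Zs| = 'C(n, m) by rewrite card_draws.
rewrite Hs HD HN.
have [q0 q1] := q_bounds R k k0.
have hp := bin_pow R n m k #|A| k0 nkm (max_card A).
have hc := concave_pow R _ _ _ q0 q1 Ak.
have he := qk_le R k k0.
have kR : 0 < k%:R :> R by rewrite ltr0n.
set q := 1 - k%:R^-1 in hp hc he q0 q1 *.
set N := 'C(n, m)%:R in hp *; set D := 'C(n - #|A|, m)%:R in hp *.
have N0 : 0 <= N by [].
have hci : (1 - (expR 1)^-1) * #|A|%:R / k%:R <= 1 - q ^+ #|A|.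
  rewrite ler_pdivrMr // [X in _ <= X]mulrC.
  apply: le_trans hc; rewrite [X in X <= _]mulrC ler_wpM2l //; lra.
have x0 : 0 <= q ^+ #|A| by apply: exprn_ge0.
nra.
Qed.

Lemma greedy_bound (R : realType) (T : finType) (Zs : {set {set T}}) (c : R) (k : nat) :
  (forall A : {set T}, (#|A| <= k)%N ->
     c * #|A|%:R / k%:R * #|Zs|%:R <= \sum_(Z in Zs) ((Z :&: A != set0)%:R : R)) ->
  forall j (A : {set T}), #|A| = j -> (j <= k)%N -> forall (h : T -> R) (G : {set T} -> R),
  (forall x, x \in A -> 0 <= h x) -> (forall Z, Z \in Zs -> 0 <= G Z) ->
  (forall Z y, Z \in Zs -> y \in Z :&: A -> h y <= G Z) ->
  c / k%:R * #|Zs|%:R * \sum_(x in A) h x <= \sum_(Z in Zs) G Z.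
Proof.
move=> hit; elim=> [|j IH] A hA jk h G h0 G0 hG.
  move/cards0_eq: hA => ->; rewrite big_set0 mulr0.
  by apply: sumr_ge0 => Z; apply: G0.
have [x0 x0A] : exists x, x \in A.
  by apply/set0Pn; rewrite -card_gt0 hA.
case: (arg_minP h x0A) => x1 x1A' hmin.
have x1A : x1 \in A by exact: x1A'.
set mu := h x1.
have mu0 : 0 <= mu by apply: h0.
have hA' : #|A :\ x1| = j by move: hA; rewrite (cardsD1 x1) x1A => -[].
have IHa := IH (A :\ x1) hA' (ltnW jk) (fun x => h x - mu)
   (fun Z => G Z - mu * (Z :&: A != set0)%:R).
have ne_of Z y : y \in Z :&: A -> Z :&: A != set0 by move=> hy; apply/set0Pn; exists y.
have IHb : c / k%:R * #|Zs|%:R * \sum_(x in A :\ x1) (h x - mu) <=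
    \sum_(Z in Zs) (G Z - mu * (Z :&: A != set0)%:R).
  apply: IHa.
  - by move=> x /setD1P [_ xA]; rewrite subr_ge0; apply: hmin.
  - move=> Z ZZs; case: (boolP (Z :&: A != set0)) => hb; last by rewrite mulr0 subr0; apply: G0.
    case/set0Pn: hb => y yZA; rewrite mulr1 subr_ge0; apply: le_trans (hG Z y ZZs yZA).
    by apply: hmin; move: yZA; rewrite inE => /andP [].
  - move=> Z y ZZs; rewrite inE => /andP [yZ /setD1P [_ yA]].
    have yZA : y \in Z :&: A by rewrite inE yZ yA.
    by rewrite (ne_of Z y yZA) mulr1 lerD2r; apply: hG.
rewrite !sumrB -mulr_sumr sumr_const in IHb.
rewrite (big_setD1 x1 x1A) /=.
have hI : c * #|A|%:R / k%:R * #|Zs|%:R <= \sum_(Z in Zs) ((Z :&: A != set0)%:R : R) by apply: hit; rewrite hA.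
rewrite hA hA' -mulr_natr in hI IHb *.
rewrite -/mu.
set I := \sum_(Z in Zs) ((Z :&: A != set0)%:R : R) in hI IHb *.
set S' := \sum_(x in A :\ x1) h x in IHb *.
have hI2 := ler_wpM2l mu0 hI.
rewrite -natr1 in hI2.
set K := k%:R^-1 in hI2 IHb *.
set N := #|Zs|%:R in hI2 IHb *.
rewrite -mulr_natr in IHb.
set SG := \sum_(Z in Zs) G Z in IHb *.
nra.
Qed.

Theorem mainTheorem4 (R : realType) (T : finType) (f : {set T} -> R)
  (k : nat) (eps : R) (S : {set T}) (d : T)
  (t : nat) (Tp Tm : {set T})
  (u_of : {set T} -> T) (v : T) :
  nonneg_setfun f -> submodular f ->
  (0 < k)%N -> 0 < eps -> #|S| = k ->
  d \notin S -> dummy f d ->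
  (1 <= t <= k)%N -> Tp \subset ~: S -> Tm \subset S ->
  #|Tp| = t -> #|Tm| = t ->
  \sum_(x in Tp) marg f x S > \sum_(y in Tm) marg f y (S :\ y) + eps * f S ->
  (* u_of Z: a maximizer of f(. | S) over Z \ S, or d if Z \ S is empty or the max is <= 0 *)
  (forall Z : {set T}, #|Z| = ceil_div #|T| k ->
     if [forall x in Z :\: S, marg f x S <= 0] then u_of Z = d
     else u_of Z \in Z :\: S /\ (forall x, x \in Z :\: S -> marg f x S <= marg f (u_of Z) S)) ->
  (* v: a minimizer of f(v | S - v) over S *)
  v \in S -> (forall y, y \in S -> marg f v (S :\ v) <= marg f y (S :\ y)) ->
  let S' := fun Z : {set T} =>
    if f (u_of Z |: (S :\ v)) > f S then u_of Z |: (S :\ v) else S in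
  let Zs := [set Z : {set T} | #|Z| == ceil_div #|T| k] in
  (#|Zs|%:R)^-1 * \sum_(Z in Zs) (f (S' Z) - f S)
    >= (1 - (expR 1)^-1) * eps / k%:R * f S.
Proof.
move=> fnn fsub k0 eps0 cardS dS dumd /andP [t1 tk] TpS TmS cTp cTm hsum huof vS vmin.
pose S' := fun Z : {set T} =>
    if f (u_of Z |: (S :\ v)) > f S then u_of Z |: (S :\ v) else S.
pose Zs := [set Z : {set T} | #|Z| == ceil_div #|T| k].
change ((1 - (expR 1)^-1) * eps / k%:R * f S <= (#|Zs|%:R)^-1 * \sum_(Z in Zs) (f (S' Z) - f S)).
set a := marg f v (S :\ v).
set c := 1 - (expR 1)^-1.
have n0 : (0 < #|T|)%N by apply: leq_trans (max_card S); rewrite cardS.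
have [nkm mn] := ceil_facts #|T| k k0 n0.
have hitA : forall A : {set T}, (#|A| <= k)%N ->
     c * #|A|%:R / k%:R * #|Zs|%:R <= \sum_(Z in Zs) ((Z :&: A != set0)%:R : R).
  by move=> A hA; apply: hit_prob.
have key : forall Z, Z \in Zs ->
    [/\ u_of Z \notin S, marg f (u_of Z) S - a <= f (S' Z) - f S, 0 <= f (S' Z) - f S
      & forall y, y \in Z :\: S -> marg f y S <= marg f (u_of Z) S].
  move=> Z; rewrite inE => /eqP hZ.
  have hu := huof Z hZ.
  have [uS hmax] : u_of Z \notin S /\ forall y, y \in Z :\: S -> marg f y S <= marg f (u_of Z) S.
    move: hu; case: ifP => [/forall_inP hall -> | _ [] /setDP [_ uS] hm].
      split=> // y /hall hy; by rewrite /marg dumd subrr.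
    by split.
  have hsm := fsub (S :\ v) S (u_of Z) (subD1set S v) uS.
  have ha : a = f S - f (S :\ v) by rewrite /a /marg setD1K.
  rewrite /S'; case: ifP => hlt; split => //.
  - rewrite /marg in hsm *; rewrite ha; lra.
  - rewrite subr_ge0; exact: ltW.
  - rewrite subrr; move/negbT: hlt; rewrite -leNgt => hle.
    rewrite /marg in hsm *; rewrite ha; lra.
  - by rewrite subrr.
pose h := fun x => Num.max 0 (marg f x S - a).
pose G := fun Z => f (S' Z) - f S.
have gb := @greedy_bound R T Zs c k hitA t Tp cTp tk h G.
have hG : c / k%:R * #|Zs|%:R * \sum_(x in Tp) h x <= \sum_(Z in Zs) G Z.
  apply: gb.
  - by move=> x _; rewrite /h le_max lexx.
  - by move=> Z /key [].
  - move=> Z y /key [_ h1 h2 h3]; rewrite inE => /andP [yZ yTp].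
    rewrite /h /G ge_max h2 /=.
    have yS : y \in Z :\: S.
      by rewrite inE yZ andbT; move/subsetP: TpS => /(_ y yTp); rewrite inE.
    by apply: le_trans h1; rewrite lerD2r; apply: h3.
have hTp : eps * f S <= \sum_(x in Tp) h x.
  have e1 : \sum_(x in Tp) (marg f x S - a) <= \sum_(x in Tp) h x.
    by apply: ler_sum => x _; rewrite /h le_max lexx orbT.
  have e2 : \sum_(y in Tm) a <= \sum_(y in Tm) marg f y (S :\ y).
    by apply: ler_sum => y yTm; apply: vmin; move/subsetP: TmS; apply.
  rewrite sumrB !sumr_const cTp in e1; rewrite sumr_const cTm in e2.
  lra.
have Npos : 0 < #|Zs|%:R :> R.
  by rewrite ltr0n /Zs card_draws bin_gt0.
have c0 : 0 <= c.
  have e2 := expR_ge1Dx (1 : R).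
  have e0 : 0 < expR 1 :> R by apply: expR_gt0.
  by rewrite /c subr_ge0 invr_le1 // ?unitfE ?gt_eqF //; lra.
have fS0 : 0 <= f S := fnn S.
rewrite -(ler_pM2l Npos) [X in _ <= X]mulrA mulfV ?gt_eqF // mul1r.
rewrite -/G.
have kR : 0 <= k%:R^-1 :> R by rewrite invr_ge0.
set K := k%:R^-1 in hG *.
set N := #|Zs|%:R in hG Npos *.
set SH := \sum_(x in Tp) h x in hG hTp.
set SG := \sum_(Z in Zs) G Z in hG *.
have cKN : 0 <= c * K * N by rewrite !mulr_ge0 // ltW.
have := ler_wpM2l cKN hTp.
nra.
Qed.
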